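(* Let $V\in\mathcal C(S^1)$ be odd and let $A=I_1\cup\dots\cup I_n\subset S^1$ be a disjoint union of closed intervals $I_j=[\alpha_j,\beta_j]$. Assume that for every continuous $h:S^1\to\mathbb R_{\ge0}$ with $h|_A=0$ one has $(V*h)(\alpha_j)>0$ and $(V*h)(\beta_j)<0$ for all $1\le j\le n$. Let $f:[0,\infty)\times S^1\to\mathbb R_{\ge0}$ be a solution of (TP) with $D=0$ such that $f(0,\cdot)|_A=0$. Then $f(t,\cdot)|_A=0$ for all $t\ge0$; equivalently, $\operatorname{supp}f(0,\cdot)\subset\overline{S^1\setminus A}$ implies $\operatorname{supp}f(t,\cdot)\subset\overline{S^1\setminus A}$ for all $t\ge0$.
   Context: $S^1=\mathbb R/\mathbb Z$; a closed interval $[\alpha,\beta]$ in $S^1$ is a closed connected proper subset with lower end $\alpha$ and upper end $\beta$ (image of $[a,b]\subset\mathbb R$, $b-a<1$). $(V*f)(\theta)=\int_{S^1}V(\theta-\psi)f(\psi)d\psi$. Equation (TP) with $D=0$: $\partial_tf=\partial_\theta((V*f)f)$. *)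

(* Defs.v *)
From Stdlib Require Import Reals Lra ZArith ClassicalEpsilon.
Open Scope R_scope.

(* Functions on S^1 = R/Z are represented as 1-periodic functions R -> R. *)
Definition periodic1 (g : R -> R) : Prop := forall x, g (x + 1) = g x.

Definition odd_fun (g : R -> R) : Prop := forall x, g (- x) = - g x.

(* The integral over S^1 of a 1-periodic function is the integral over [0,1].
   (V*g)(theta) = int_0^1 V(theta - psi) g(psi) dpsi; chosen by epsilon,
   so it equals the Riemann integral whenever the integrand is integrable
   (always the case for continuous V, g). *)
Definition conv (V g : R -> R) (theta : R) : R :=
  epsilon (inhabits 0)
    (fun c => exists pr : Riemann_integrable (fun psi => V (theta - psi) * g psi) 0 1,
               RiemannInt pr = c).

(* Closed interval [a,b] of S^1 (image of [a,b] subset R, with b - a < 1):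
   theta (mod 1) lies in it. *)
Definition in_arc (a b theta : R) : Prop :=
  exists k : Z, a <= theta + IZR k <= b.

Definition inA (n : nat) (alpha beta : nat -> R) (theta : R) : Prop :=
  exists j, (j < n)%nat /\ in_arc (alpha j) (beta j) theta.

Definition valid_intervals (n : nat) (alpha beta : nat -> R) : Prop :=
  (forall j, (j < n)%nat -> alpha j <= beta j /\ beta j - alpha j < 1) /\
  (forall i j, (i < n)%nat -> (j < n)%nat -> i <> j ->
     forall theta, ~ (in_arc (alpha i) (beta i) theta /\ in_arc (alpha j) (beta j) theta)).

Definition cont2_on (P : R -> R -> Prop) (F : R -> R -> R) : Prop :=
  forall t theta, P t theta ->
  forall eps, 0 < eps -> exists del, 0 < del /\
    forall s phi, P s phi -> Rabs (s - t) < del -> Rabs (phi - theta) < del ->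
      Rabs (F s phi - F t theta) < eps.

(* Classical solution f(t,theta) of (TP) with D = 0 on [0,oo) x S^1:
   d_t f = d_theta ((V*f) f).  f is continuous on [0,oo) x S^1, C^1 on
   (0,oo) x S^1, 1-periodic in theta and the equation holds pointwise for t > 0. *)
Definition TP0_solution (V : R -> R) (f : R -> R -> R) : Prop :=
  (forall t, 0 <= t -> periodic1 (f t)) /\
  exists ft fth : R -> R -> R,
    cont2_on (fun t _ => 0 <= t) f /\
    cont2_on (fun t _ => 0 < t) ft /\
    cont2_on (fun t _ => 0 < t) fth /\
    (forall t theta, 0 < t -> derivable_pt_lim (fun s => f s theta) t (ft t theta)) /\
    (forall t theta, 0 < t -> derivable_pt_lim (fun phi => f t phi) theta (fth t theta)) /\
    (forall t theta, 0 < t ->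
       derivable_pt_lim (fun phi => conv V (f t) phi * f t phi) theta (ft t theta)).

(* Main.v *)
Require Import Defs.
From Stdlib Require Import Reals ZArith Lra Lia ClassicalEpsilon Classical.
From Coquelicot Require Import Coquelicot.
Open Scope R_scope.

Ltac rabs := unfold Rabs in *; repeat match goal with
  | H : context [Rcase_abs ?x] |- _ => destruct (Rcase_abs x)
  | |- context [Rcase_abs ?x] => destruct (Rcase_abs x)
  end.

Lemma int_close (a b : Z) : Rabs (IZR a - IZR b) < 1 -> a = b.
Proof.
  intros H. rewrite <- minus_IZR in H. 
  assert (H1 : IZR (-1) < IZR (a - b)) by (rabs; lra).
  assert (H2 : IZR (a - b) < IZR 1) by (rabs; lra).
  apply lt_IZR in H1. apply lt_IZR in H2. lia.
Qed.

Definition nintZ (y : R) : Z := (up (y + /2) - 1)%Z.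
Definition Dz (y : R) : R := Rabs (y - IZR (nintZ y)).

Lemma nint_bound y : Rabs (y - IZR (nintZ y)) <= /2.
Proof.
  unfold nintZ. rewrite minus_IZR. destruct (archimed (y + /2)) as [H1 H2].
  apply Rabs_le. lra.
Qed.

Lemma Dz_le y k : Dz y <= Rabs (y - IZR k).
Proof.
  destruct (Rle_or_lt (Dz y) (Rabs (y - IZR k))) as [H|H]; auto.
  exfalso. pose proof (nint_bound y) as Hb. unfold Dz in H.
  assert (H0 : Rabs (IZR k - IZR (nintZ y)) < 1) by (rabs; lra).
  apply int_close in H0. subst. lra.
Qed.

Lemma Dz_ge0 y : 0 <= Dz y.
Proof. apply Rabs_pos. Qed.

Lemma Dz_half y : Dz y <= /2.
Proof. apply nint_bound. Qed.

Lemma Dz_abs y : Dz y <= Rabs y.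
Proof. pose proof (Dz_le y 0). rewrite Rminus_0_r in H. exact H. Qed.

Lemma Dz_lip x y : Rabs (Dz x - Dz y) <= Rabs (x - y).
Proof.
  pose proof (Dz_le x (nintZ y)). pose proof (Dz_le y (nintZ x)).
  unfold Dz in *. rabs; lra.
Qed.

Lemma Dz_per y k : Dz (y + IZR k) = Dz y.
Proof.
  apply Rle_antisym.
  - pose proof (Dz_le (y + IZR k) (nintZ y + k)). rewrite plus_IZR in H.
    unfold Dz at 2. replace (y + IZR k - (IZR (nintZ y) + IZR k)) with (y - IZR (nintZ y)) in H by ring. exact H.
  - pose proof (Dz_le y (nintZ (y + IZR k) - k)). rewrite minus_IZR in H.
    unfold Dz at 2. replace (y - (IZR (nintZ (y + IZR k)) - IZR k)) with (y + IZR k - IZR (nintZ (y + IZR k))) in H by ring. exact H.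
Qed.

Lemma Dz_small y : 0 <= y <= /2 -> Dz y = y.
Proof.
  intros Hy. apply Rle_antisym.
  - pose proof (Dz_abs y). rewrite Rabs_pos_eq in H; lra.
  - unfold Dz. destruct (Z_lt_le_dec 0 (nintZ y)) as [H|H].
    + assert (IZR 1 <= IZR (nintZ y)) by (apply IZR_le; lia). rabs; lra.
    + assert (IZR (nintZ y) <= 0) by (apply IZR_le in H; exact H). rabs; lra.
Qed.

Lemma Dz_far y e : 0 <= e -> e <= y <= 1 - e -> e <= Dz y.
Proof.
  intros He Hy. unfold Dz. destruct (Z_lt_le_dec 0 (nintZ y)) as [H|H].
  + assert (IZR 1 <= IZR (nintZ y)) by (apply IZR_le; lia). rabs; lra.
  + assert (IZR (nintZ y) <= 0) by (apply IZR_le in H; exact H). rabs; lra.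
Qed.

Lemma lip_cont (g : R -> R) : (forall a b, Rabs (g a - g b) <= Rabs (a - b)) -> continuity g.
Proof.
  intros H x. unfold continuity_pt, continue_in, limit1_in, limit_in. simpl. unfold R_dist.
  intros eps Heps. exists eps. split; auto. intros y [_ Hy].
  eapply Rle_lt_trans. apply H. exact Hy.
Qed.

Lemma Dz_cont : continuity Dz.
Proof. apply lip_cont, Dz_lip. Qed.

Lemma per_nat g : periodic1 g -> forall m x, g (x + INR m) = g x.
Proof.
  intros Hg m. induction m; intros x.
  - simpl. f_equal. ring.
  - rewrite S_INR. replace (x + (INR m + 1)) with ((x + INR m) + 1) by ring.
    rewrite Hg. apply IHm.
Qed.

Lemma per_int g : periodic1 g -> forall k x, g (x + IZR k) = g x.
Proof.
  intros Hg k x. destruct (Z_le_gt_dec 0 k) as [H|H].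
  - rewrite <- (Z2Nat.id k) by lia. rewrite <- INR_IZR_INZ. apply per_nat; auto.
  - replace k with (- Z.of_nat (Z.to_nat (- k)))%Z by lia.
    rewrite opp_IZR, <- INR_IZR_INZ.
    rewrite <- (per_nat g Hg (Z.to_nat (-k)) (x + - _)). f_equal. ring.
Qed.

Lemma reduce01 x : exists k : Z, 0 <= x + IZR k <= 1.
Proof.
  exists (1 - up x)%Z. rewrite minus_IZR. destruct (archimed x). lra.
Qed.

Lemma per_bounded g : continuity g -> periodic1 g -> exists B, 0 <= B /\ forall x, Rabs (g x) <= B.
Proof.
  intros Hc Hp.
  destruct (continuity_ab_maj (fun x => Rabs (g x)) 0 1) as [Mx [HM _]]. lra.
  { intros c _. apply continuity_pt_comp with (f1 := g) (f2 := Rabs). apply Hc. apply Rcontinuity_abs. }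
  exists (Rabs (g Mx)). split. apply Rabs_pos.
  intros x. destruct (reduce01 x) as [k Hk]. rewrite <- (per_int g Hp k x). apply HM. exact Hk.
Qed.

Definition mid (a b : R) := (a + b) / 2.
Definition hl (a b : R) := (b - a) / 2.

Lemma in_arc_Dz a b x : in_arc a b x <-> Dz (x - mid a b) <= hl a b.
Proof.
  split.
  - intros [k Hk]. rewrite <- (Dz_per _ k). eapply Rle_trans. apply Dz_abs.
    unfold mid, hl. apply Rabs_le. lra.
  - intros H. unfold Dz in H. exists (- nintZ (x - mid a b))%Z. rewrite opp_IZR.
    unfold mid, hl in *. rabs; lra.
Qed.

Fixpoint sumR (F : nat -> R) (n : nat) : R :=
  match n with O => 0 | S k => sumR F k + F k end.

Lemma sumR_ge0 F n : (forall i, (i < n)%nat -> 0 <= F i) -> 0 <= sumR F n.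
Proof.
  induction n; simpl; intros H. lra.
  assert (0 <= F n) by (apply H; lia). assert (0 <= sumR F n) by (apply IHn; intros; apply H; lia). lra.
Qed.

Lemma sumR_ge_term F n i : (forall i, (i < n)%nat -> 0 <= F i) -> (i < n)%nat -> F i <= sumR F n.
Proof.
  induction n; simpl; intros H Hi. lia.
  destruct (Nat.eq_dec i n) as [->|Hne].
  - assert (0 <= sumR F n) by (apply sumR_ge0; intros; apply H; lia). lra.
  - assert (F i <= sumR F n) by (apply IHn; [intros; apply H; lia| lia]).
    assert (0 <= F n) by (apply H; lia). lra.
Qed.

Lemma sumR_ext F G n : (forall i, (i < n)%nat -> F i = G i) -> sumR F n = sumR G n.
Proof.
  induction n; simpl; intros H. auto. rewrite IHn by (intros; apply H; lia). rewrite H by lia. auto.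
Qed.

Lemma sumR_le F G n : (forall i, (i < n)%nat -> F i <= G i) -> sumR F n <= sumR G n.
Proof.
  induction n; simpl; intros H. lra.
  assert (F n <= G n) by (apply H; lia). assert (sumR F n <= sumR G n) by (apply IHn; intros; apply H; lia). lra.
Qed.

Lemma sumR_zero F n : (forall i, (i < n)%nat -> 0 <= F i) -> sumR F n = 0 -> forall i, (i < n)%nat -> F i = 0.
Proof.
  intros H0 Hs i Hi. pose proof (sumR_ge_term F n i H0 Hi). pose proof (H0 i Hi). lra.
Qed.

Lemma sumR_cont (F : nat -> R -> R) n : (forall i, (i < n)%nat -> continuity (F i)) ->
  continuity (fun x => sumR (fun i => F i x) n).
Proof.
  induction n; simpl; intros H.
  - apply continuity_const. intros ? ?; auto.
  - apply continuity_plus. apply IHn. intros; apply H; lia. apply H; lia.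
Qed.

Lemma sumR_lin F G c n : sumR (fun i => F i + c * G i) n = sumR F n + c * sumR G n.
Proof. induction n; simpl. ring. rewrite IHn. ring. Qed.

Definition clamp01 z := Rmax 0 (Rmin 1 z).

Lemma clamp01_lip a b : Rabs (clamp01 a - clamp01 b) <= Rabs (a - b).
Proof. unfold clamp01, Rmax, Rmin. repeat destruct Rle_dec; rabs; lra. Qed.

Lemma clamp01_bounds z : 0 <= clamp01 z <= 1.
Proof. unfold clamp01, Rmax, Rmin. repeat destruct Rle_dec; lra. Qed.

Lemma Rmax0_lip a b : Rabs (Rmax 0 a - Rmax 0 b) <= Rabs (a - b).
Proof. unfold Rmax. repeat destruct Rle_dec; rabs; lra. Qed.

Definition tau a b e x := clamp01 ((hl a b + e - Dz (x - mid a b)) / e).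

Lemma tau_cont a b e : continuity (tau a b e).
Proof.
  intros x. unfold tau.
  apply continuity_pt_comp with (f2 := clamp01) (f1 := fun x => (hl a b + e - Dz (x - mid a b)) / e).
  - unfold Rdiv. apply continuity_pt_mult. apply continuity_pt_minus.
    apply continuity_pt_const. intros ? ?; auto.
    apply continuity_pt_comp with (f1 := fun x => x - mid a b) (f2 := Dz).
    apply continuity_pt_minus. apply continuity_pt_id. apply continuity_pt_const. intros ? ?; auto.
    apply Dz_cont. apply continuity_pt_const. intros ? ?; auto.
  - apply lip_cont. apply clamp01_lip.
Qed.

Lemma tau_bounds a b e x : 0 <= tau a b e x <= 1.
Proof. apply clamp01_bounds. Qed.

Lemma tau_one a b e x : 0 < e -> Dz (x - mid a b) <= hl a b -> tau a b e x = 1.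
Proof.
  intros He H. unfold tau, clamp01. assert (1 <= (hl a b + e - Dz (x - mid a b)) / e).
  { apply Rmult_le_reg_r with e; auto. unfold Rdiv. rewrite Rmult_assoc, Rinv_l by lra. lra. }
  unfold Rmax, Rmin. repeat destruct Rle_dec; lra.
Qed.

Lemma tau_zero a b e x : 0 < e -> hl a b + e <= Dz (x - mid a b) -> tau a b e x = 0.
Proof.
  intros He H. unfold tau, clamp01. assert ((hl a b + e - Dz (x - mid a b)) / e <= 0).
  { unfold Rdiv. apply Rmult_le_0_r. lra. left. apply Rinv_0_lt_compat. lra. }
  unfold Rmax, Rmin. repeat destruct Rle_dec; lra.
Qed.

Lemma tau_per a b e : periodic1 (tau a b e).
Proof.
  intros x. unfold tau. replace (x + 1 - mid a b) with ((x - mid a b) + IZR 1) by (simpl; ring).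
  rewrite Dz_per. auto.
Qed.

Definition sumtau n (al be : nat -> R) e x := sumR (fun i => tau (al i) (be i) e x) n.
Definition phi n al be e x := Rmax 0 (1 - sumtau n al be e x).

Lemma sumtau_ge0 n al be e x : 0 <= sumtau n al be e x.
Proof. apply sumR_ge0. intros. apply tau_bounds. Qed.

Lemma phi_cont n al be e : continuity (phi n al be e).
Proof.
  intros x. unfold phi. apply continuity_pt_comp with (f2 := Rmax 0) (f1 := fun x => 1 - sumtau n al be e x).
  apply continuity_pt_minus. apply continuity_pt_const. intros ? ?; auto.
  apply (sumR_cont (fun i => tau (al i) (be i) e)). intros; apply tau_cont.
  apply lip_cont. apply Rmax0_lip.
Qed.

Lemma phi_per n al be e : periodic1 (phi n al be e).
Proof.
  intros x. unfold phi, sumtau. f_equal. f_equal. apply sumR_ext. intros. apply tau_per.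
Qed.

Lemma phi_bounds n al be e x : 0 <= phi n al be e x <= 1.
Proof. pose proof (sumtau_ge0 n al be e x). unfold phi, Rmax. destruct Rle_dec; lra. Qed.

Lemma phi_compl n al be e x : 1 - phi n al be e x <= sumtau n al be e x.
Proof. pose proof (sumtau_ge0 n al be e x). unfold phi, Rmax. destruct Rle_dec; lra. Qed.

Lemma phi_zero n al be e x : 0 < e -> inA n al be x -> phi n al be e x = 0.
Proof.
  intros He [j [Hj Ha]]. apply in_arc_Dz in Ha.
  assert (tau (al j) (be j) e x <= sumtau n al be e x).
  { apply (sumR_ge_term (fun i => tau (al i) (be i) e x)); auto. intros; apply tau_bounds. }
  rewrite tau_one in H by auto. unfold phi, Rmax. destruct Rle_dec; lra.
Qed.

Lemma cont_c (g : R -> R) x : continuity g -> continuous g x.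
Proof. intros H. apply continuity_pt_filterlim. apply H. Qed.

Lemma cont_ex (g : R -> R) a b : continuity g -> ex_RInt g a b.
Proof. intros H. apply (ex_RInt_continuous (V := R_CompleteNormedModule)). intros. apply cont_c, H. Qed.

Lemma chasles (g : R -> R) a b c : continuity g -> RInt g a b + RInt g b c = RInt g a c.
Proof. intros H. apply (RInt_Chasles g a b c); apply cont_ex; auto. Qed.

Lemma RInt_lin (g h : R -> R) a b k : continuity g -> continuity h ->
  RInt (fun x => g x + k * h x) a b = RInt g a b + k * RInt h a b.
Proof.
  intros Hg Hh.
  assert (E1 : ex_RInt g a b) by (apply cont_ex; auto).
  assert (E2 : ex_RInt h a b) by (apply cont_ex; auto).
  pose proof (RInt_plus g (fun x => scal k (h x)) a b E1 (ex_RInt_scal h a b k E2)) as H.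
  pose proof (RInt_scal h a b k E2) as H2.
  change (RInt (fun x => g x + k * h x) a b = RInt g a b + RInt (fun x => k * h x) a b) in H.
  change (RInt (fun x => k * h x) a b = k * RInt h a b) in H2.
  rewrite H, H2. reflexivity.
Qed.

Lemma RInt_upper (g : R -> R) a b B : a <= b -> continuity g -> (forall x, a < x < b -> g x <= B) ->
  RInt g a b <= B * (b - a).
Proof.
  intros Hab Hg H. eapply Rle_trans. apply (RInt_le g (fun _ => B)); auto. apply cont_ex; auto.
  apply ex_RInt_const. rewrite RInt_const. change (scal (b - a) B) with ((b - a) * B). lra.
Qed.

Lemma RInt_lower (g : R -> R) a b B : a <= b -> continuity g -> (forall x, a < x < b -> B <= g x) ->
  B * (b - a) <= RInt g a b.
Proof.
  intros Hab Hg H. eapply Rle_trans. 2: apply (RInt_le (fun _ => B) g); auto. 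
  rewrite RInt_const. change (scal (b - a) B) with ((b - a) * B). lra.
  apply ex_RInt_const. apply cont_ex; auto.
Qed.

Lemma RInt_mono (g h : R -> R) a b : a <= b -> continuity g -> continuity h -> (forall x, a < x < b -> g x <= h x) ->
  RInt g a b <= RInt h a b.
Proof. intros. apply RInt_le; auto; apply cont_ex; auto. Qed.

Lemma RInt_nonneg (g : R -> R) a b : a <= b -> continuity g -> (forall x, a < x < b -> 0 <= g x) -> 0 <= RInt g a b.
Proof. intros. pose proof (RInt_lower g a b 0 H H0 H1). lra. Qed.

Lemma deriv_cont (F : R -> R) x d : is_derive F x d -> continuity_pt F x.
Proof.
  intros H. apply continuity_pt_filterlim.
  apply (ex_derive_continuous (K:=R_AbsRing) (V:=R_NormedModule) F x). exists d. exact H.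
Qed.

Lemma per_shift (p : R -> R) : continuity p -> periodic1 p -> forall c, RInt p c (c + 1) = RInt p 0 1.
Proof.
  intros Hc Hp.
  set (I := (fun b => RInt p 0 b) : R -> R).
  assert (HI : forall b, is_derive I b (p b)).
  { intros b. apply (is_derive_RInt (V:=R_NormedModule) p I 0 b). apply filter_forall. intros x. unfold I.
    apply (RInt_correct (V:=R_CompleteNormedModule)). apply cont_ex; auto. apply cont_c; auto. }
  set (F := fun c => I (c + 1) - I c).
  assert (HF : forall c, RInt p c (c + 1) = F c).
  { intros c. pose proof (chasles p 0 c (c+1) Hc). unfold F, I. lra. }
  assert (HD : forall c, is_derive F c 0).
  { intros c. unfold F.
    assert (H1 : is_derive (fun c => I (c + 1)) c (p (c + 1))).
    { assert (Hd1 : is_derive (fun c : R => c + 1) c 1).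
      { pose proof (is_derive_plus (fun c => c) (fun _ => 1) c 1 0 (is_derive_id c) (is_derive_const 1 c)) as Hq.
        change (is_derive (fun c : R => c + 1) c (1 + 0)) in Hq. rewrite Rplus_0_r in Hq. exact Hq. }
      pose proof (is_derive_comp I (fun c => c + 1) c (p (c + 1)) 1 (HI (c+1)) Hd1) as H.
      change (is_derive (fun c => I (c + 1)) c (1 * p (c + 1))) in H. rewrite Rmult_1_l in H. exact H. }
    pose proof (is_derive_minus _ _ c _ _ H1 (HI c)) as H2.
    change (is_derive (fun c => I (c + 1) - I c) c (p (c + 1) - p c)) in H2. rewrite Hp, Rminus_diag in H2. exact H2. }
  intros c. pose proof (HF c) as E1. pose proof (HF 0) as E2. rewrite Rplus_0_l in E2.
  destruct (MVT_gen F 0 c (fun _ => 0)) as [d [_ Hd]].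
  - intros. apply HD.
  - intros. apply (deriv_cont F x 0). apply HD.
  - unfold F, I in *. lra.
Qed.

Lemma cut_int (g : R -> R) a b e : continuity g -> periodic1 g -> (forall x, 0 <= g x) -> 0 < e -> a <= b ->
  RInt (fun x => g x * tau a b e x) 0 1 <= RInt g (a - e) (b + e).
Proof.
  intros Hc Hp Hg He Hab.
  set (p := fun x => g x * tau a b e x).
  assert (Pc : continuity p) by (apply continuity_mult; auto; apply tau_cont).
  assert (Pp : periodic1 p) by (intros x; unfold p; rewrite Hp, tau_per; auto).
  assert (Ple : forall x, p x <= g x).
  { intros x. unfold p. pose proof (tau_bounds a b e x). pose proof (Hg x). nra. }
  rewrite <- (per_shift p Pc Pp (a - e)).
  destruct (Rle_or_lt (b + e) (a - e + 1)) as [H|H].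
  - rewrite <- (chasles p (a - e) (b + e) (a - e + 1) Pc).
    assert (RInt p (a - e) (b + e) <= RInt g (a - e) (b + e)).
    { apply RInt_mono; [lra|auto|auto|intros; apply Ple]. }
    assert (RInt p (b + e) (a - e + 1) <= 0 * (a - e + 1 - (b + e))).
    { apply RInt_upper; [lra|auto|]. intros x Hx. unfold p. rewrite tau_zero; auto. lra.
      apply Dz_far. unfold hl; lra. unfold hl, mid; lra. }
    lra.
  - assert (RInt p (a - e) (a - e + 1) <= RInt g (a - e) (a - e + 1)).
    { apply RInt_mono; [lra|auto|auto|intros; apply Ple]. }
    rewrite <- (chasles g (a - e) (a - e + 1) (b + e) Hc).
    assert (0 <= RInt g (a - e + 1) (b + e)) by (apply RInt_nonneg; [lra|auto|auto]).
    lra.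
Qed.

Lemma int_extend (g : R -> R) a b e B : continuity g -> (forall x, Rabs (g x) <= B) -> a <= b -> 0 <= e ->
  RInt g (a - e) (b + e) <= RInt g a b + 2 * e * B.
Proof.
  intros Hc HB Hab He.
  rewrite <- (chasles g (a - e) a (b + e) Hc), <- (chasles g a b (b + e) Hc).
  assert (RInt g (a - e) a <= B * (a - (a - e))).
  { apply RInt_upper; [lra|auto|]. intros x _. pose proof (HB x). rabs; lra. }
  assert (RInt g b (b + e) <= B * (b + e - b)).
  { apply RInt_upper; [lra|auto|]. intros x _. pose proof (HB x). rabs; lra. }
  lra.
Qed.

Lemma RInt_zero a b : RInt (fun _ => 0) a b = 0.
Proof. rewrite RInt_const. apply (Rmult_0_r (b - a)). Qed.

Lemma RInt_sumR (F : nat -> R -> R) n a b : (forall i, (i < n)%nat -> continuity (F i)) ->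
  RInt (fun x => sumR (fun i => F i x) n) a b = sumR (fun i => RInt (F i) a b) n.
Proof.
  induction n; intros H; simpl.
  - apply RInt_zero.
  - assert (C1 : continuity (fun x => sumR (fun i => F i x) n)) by (apply (sumR_cont F n); intros; apply H; lia).
    assert (C2 : continuity (F n)) by (apply H; lia).
    pose proof (RInt_lin (fun x => sumR (fun i => F i x) n) (F n) a b 1 C1 C2) as E.
    rewrite <- IHn by (intros; apply H; lia). rewrite Rmult_1_l in E. rewrite <- E.
    apply RInt_ext. intros. rewrite Rmult_1_l. reflexivity.
Qed.

Lemma conv_eq V g th : continuity V -> continuity g ->
  conv V g th = RInt (fun psi => V (th - psi) * g psi) 0 1.
Proof.
  intros HV Hg. unfold conv.
  assert (Hc : forall x, continuity_pt (fun psi => V (th - psi) * g psi) x).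
  { intros x. apply continuity_pt_mult; [|apply Hg].
    apply continuity_pt_comp with (f1 := fun psi => th - psi) (f2 := V); [|apply HV].
    apply continuity_pt_minus. apply continuity_pt_const. intros ? ?; auto. apply continuity_pt_id. }
  assert (pr : Riemann_integrable (fun psi => V (th - psi) * g psi) 0 1).
  { apply continuity_implies_RiemannInt. lra. intros; apply Hc. }
  destruct (epsilon_spec (inhabits 0) (fun c => exists pr : Riemann_integrable (fun psi => V (th - psi) * g psi) 0 1, RiemannInt pr = c)) as [pr' Hpr'].
  - exists (RiemannInt pr). exists pr. auto.
  - rewrite <- Hpr'. symmetry. apply RInt_Reals.
Qed.

Ltac req := match goal with |- @eq _ ?a ?b => change (@eq R a b) end.

Lemma shift_cont V th : continuity V -> continuity (fun psi => V (th - psi)).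
Proof.
  intros HV x. apply continuity_pt_comp with (f1 := fun psi => th - psi) (f2 := V); [|apply HV].
  apply continuity_pt_minus. apply continuity_pt_const. intros ? ?; auto. apply continuity_pt_id.
Qed.

Lemma sumR_mult_l c F n : c * sumR F n = sumR (fun i => c * F i) n.
Proof. induction n; simpl. ring. rewrite <- IHn. ring. Qed.

Lemma sumR_const c n : sumR (fun _ => c) n = INR n * c.
Proof. induction n; simpl sumR. simpl. ring. rewrite IHn, S_INR. ring. Qed.

Lemma sumR_add_const F c n : sumR (fun i => F i + c) n = sumR F n + INR n * c.
Proof. induction n; simpl sumR. simpl. ring. rewrite IHn, S_INR. ring. Qed.

Lemma RInt_scal' (h : R -> R) a b k : continuity h -> RInt (fun x => k * h x) a b = k * RInt h a b.
Proof.
  intros Hh. pose proof (RInt_lin (fun _ => 0) h a b k) as E. rewrite RInt_zero in E.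
  rewrite <- (Rplus_0_l (k * RInt h a b)), <- E. apply RInt_ext. intros. req. ring.
  apply continuity_const. intros ? ?; auto. auto.
Qed.

Section Key.
Variables (V : R -> R) (n : nat) (al be : nat -> R) (g : R -> R) (M B : R).
Hypotheses (HV : continuity V) (HM : forall x, Rabs (V x) <= M)
  (Hab : forall i, (i < n)%nat -> al i <= be i)
  (Hg : continuity g) (Hgp : periodic1 g) (Hg0 : forall x, 0 <= g x) (HB : forall x, Rabs (g x) <= B).

Definition EE := sumR (fun i => RInt g (al i) (be i)) n.

Lemma key_aux e th : 0 < e ->
  Rabs (conv V g th - conv V (fun x => g x * phi n al be e x) th) <= M * (EE + 2 * e * B * INR n).
Proof.
  intros He.
  set (h := fun x => g x * phi n al be e x).
  assert (Hh : continuity h) by (apply continuity_mult; auto; apply phi_cont).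
  set (w := fun x => g x * (1 - phi n al be e x)).
  assert (Hw : continuity w).
  { apply continuity_mult; auto. apply continuity_minus. apply continuity_const. intros ? ?; auto. apply phi_cont. }
  assert (Hsh := shift_cont V th HV).
  rewrite (conv_eq V g th HV Hg), (conv_eq V h th HV Hh).
  assert (Esplit : RInt (fun psi => V (th - psi) * g psi) 0 1 =
     RInt (fun psi => V (th - psi) * h psi) 0 1 + 1 * RInt (fun psi => V (th - psi) * w psi) 0 1).
  { rewrite <- RInt_lin. apply RInt_ext. intros. unfold h, w. req. ring.
    apply continuity_mult; auto. apply continuity_mult; auto. }
  rewrite Esplit.
  set (st := fun x => g x * sumtau n al be e x).
  assert (Hst : continuity st).
  { apply continuity_mult; auto. apply (sumR_cont (fun i => tau (al i) (be i) e)). intros; apply tau_cont. }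
  assert (M0 : 0 <= M) by (pose proof (HM 0); pose proof (Rabs_pos (V 0)); lra).
  assert (Hpt : forall x, Rabs (V (th - x) * w x) <= M * st x).
  { intros x. unfold w, st. pose proof (phi_bounds n al be e x). pose proof (phi_compl n al be e x).
    pose proof (HM (th - x)). pose proof (Hg0 x). rewrite Rabs_mult.
    rewrite (Rabs_pos_eq (g x * _)) by nra. 
    apply Rmult_le_compat; try apply Rabs_pos; try nra. }
  assert (Ist : RInt st 0 1 <= EE + 2 * e * B * INR n).
  { assert (E1 : RInt st 0 1 = sumR (fun i => RInt (fun x => g x * tau (al i) (be i) e x) 0 1) n).
    { rewrite <- RInt_sumR. apply RInt_ext. intros. unfold st, sumtau. rewrite sumR_mult_l. reflexivity.
      intros. apply continuity_mult; auto. apply tau_cont. }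
    rewrite E1. unfold EE. 
    replace (sumR (fun i => RInt g (al i) (be i)) n + 2 * e * B * INR n) with
      (sumR (fun i => RInt g (al i) (be i) + 2 * e * B) n) by (rewrite sumR_add_const; ring).
    apply sumR_le. intros i Hi. eapply Rle_trans. apply cut_int; auto. apply int_extend; auto. lra. }
  assert (Hx : forall a b : R, a + 1 * b - a = b) by (intros; ring). rewrite Hx.
  eapply Rle_trans. apply abs_RInt_le. lra. apply cont_ex. apply continuity_mult; auto.
  eapply Rle_trans. apply (RInt_mono _ (fun x => M * st x)). lra.
  - intros x. apply continuity_pt_comp with (f2 := Rabs) (f1 := fun t => V (th - t) * w t).
    apply continuity_mult; auto. apply Rcontinuity_abs.
  - apply continuity_mult; auto. apply continuity_const. intros ? ?; auto.
  - intros. apply Hpt.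
  - rewrite RInt_scal' by auto. apply Rmult_le_compat_l; auto.
Qed.

Hypothesis (Hh : forall h : R -> R, continuity h -> periodic1 h -> (forall x, 0 <= h x) ->
     (forall x, inA n al be x -> h x = 0) -> (exists x, h x <> 0) ->
     forall j, (j < n)%nat -> conv V h (al j) > 0 /\ conv V h (be j) < 0).

Lemma conv_h_sign e j : 0 < e -> (j < n)%nat ->
  0 <= conv V (fun x => g x * phi n al be e x) (al j) /\ conv V (fun x => g x * phi n al be e x) (be j) <= 0.
Proof.
  intros He Hj.
  set (h := fun x => g x * phi n al be e x).
  assert (Hc : continuity h) by (apply continuity_mult; auto; apply phi_cont).
  destruct (classic (exists x, h x <> 0)) as [Hex|Hno].
  - destruct (Hh h Hc) with (j := j) as [H1 H2]; auto.
    + intros x. unfold h. rewrite Hgp, phi_per. auto.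
    + intros x. unfold h. pose proof (phi_bounds n al be e x). pose proof (Hg0 x). nra.
    + intros x Hx. unfold h. rewrite phi_zero; auto. ring.
    + lra.
  - assert (Z : forall th, conv V h th = 0).
    { intros th. rewrite conv_eq; auto. transitivity (RInt (fun _ => 0) 0 1); [|apply RInt_zero]. apply RInt_ext. intros x _.
      assert (h x = 0) by (apply NNPP; intros C; apply Hno; exists x; auto). rewrite H. req. ring. }
    rewrite !Z. lra.
Qed.

Lemma key j : (j < n)%nat -> - M * EE <= conv V g (al j) /\ conv V g (be j) <= M * EE.
Proof.
  intros Hj.
  assert (M0 : 0 <= M) by (pose proof (HM 0); pose proof (Rabs_pos (V 0)); lra).
  assert (B0 : 0 <= B) by (pose proof (HB 0); pose proof (Rabs_pos (g 0)); lra).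
  assert (N0 : 0 <= INR n) by apply pos_INR.
  assert (MBN : 0 <= M * B * INR n) by (apply Rmult_le_pos; auto; apply Rmult_le_pos; auto).
  split.
  - destruct (Rle_or_lt (- M * EE) (conv V g (al j))) as [H|H]; auto. exfalso.
    set (d := - M * EE - conv V g (al j)).
    set (e := d / (2 * (M * B * INR n + 1))).
    assert (He : 0 < e). { unfold e, d. apply Rdiv_lt_0_compat; lra. }
    assert (Hed : M * (2 * e * B * INR n) < d).
    { unfold e. unfold Rdiv. 
      replace (M * (2 * (d * / (2 * (M * B * INR n + 1))) * B * INR n)) with (d * ((M * B * INR n) / (M * B * INR n + 1))) by (field; lra).
      rewrite <- (Rmult_1_r d) at 2. apply Rmult_lt_compat_l. unfold d; lra.
      apply Rmult_lt_reg_r with (M * B * INR n + 1). lra. unfold Rdiv. rewrite Rmult_assoc, Rinv_l by lra. lra. }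
    pose proof (key_aux e (al j) He). pose proof (conv_h_sign e j He Hj).
    rabs; unfold d in *; nra.
  - destruct (Rle_or_lt (conv V g (be j)) (M * EE)) as [H|H]; auto. exfalso.
    set (d := conv V g (be j) - M * EE).
    set (e := d / (2 * (M * B * INR n + 1))).
    assert (He : 0 < e). { unfold e, d. apply Rdiv_lt_0_compat; lra. }
    assert (Hed : M * (2 * e * B * INR n) < d).
    { unfold e. unfold Rdiv. 
      replace (M * (2 * (d * / (2 * (M * B * INR n + 1))) * B * INR n)) with (d * ((M * B * INR n) / (M * B * INR n + 1))) by (field; lra).
      rewrite <- (Rmult_1_r d) at 2. apply Rmult_lt_compat_l. unfold d; lra.
      apply Rmult_lt_reg_r with (M * B * INR n + 1). lra. unfold Rdiv. rewrite Rmult_assoc, Rinv_l by lra. lra. }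
    pose proof (key_aux e (be j) He). pose proof (conv_h_sign e j He Hj).
    rabs; unfold d in *; nra.
Qed.
End Key.

Lemma fin_min (P : nat -> R -> Prop) n :
  (forall i, (i < n)%nat -> exists e, 0 < e /\ forall e', 0 < e' <= e -> P i e') ->
  exists e, 0 < e /\ forall i, (i < n)%nat -> forall e', 0 < e' <= e -> P i e'.
Proof.
  induction n; intros H.
  - exists 1. split. lra. intros; lia.
  - destruct IHn as [e1 [He1 H1]]. intros; apply H; lia.
    destruct (H n) as [e2 [He2 H2]]. lia.
    exists (Rmin e1 e2). split. apply Rmin_glb_lt; auto.
    intros i Hi e' He'. pose proof (Rmin_l e1 e2). pose proof (Rmin_r e1 e2).
    destruct (Nat.eq_dec i n) as [->|Hne].
    + apply H2. lra.
    + apply H1. lia. lra.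
Qed.

Lemma nondegenerate V n al be : valid_intervals n al be ->
  (forall h : R -> R, continuity h -> periodic1 h -> (forall x, 0 <= h x) ->
     (forall x, inA n al be x -> h x = 0) -> (exists x, h x <> 0) ->
     forall j, (j < n)%nat -> conv V h (al j) > 0 /\ conv V h (be j) < 0) ->
  forall j, (j < n)%nat -> al j < be j.
Proof.
  intros [Hv Hd] Hh j Hj.
  destruct (Hv j Hj) as [Hle _]. destruct (Rle_lt_or_eq_dec _ _ Hle) as [Hlt|Heq]; auto. exfalso.
  set (p := al j).
  destruct (fin_min (fun i e => i = j \/ hl (al i) (be i) + 2 * e <= Dz (p - mid (al i) (be i))) n) as [e0 [He0 H0]].
  { intros i Hi. destruct (Nat.eq_dec i j) as [->|Hne].
    - exists 1. split. lra. intros; auto.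
    - assert (Hn : ~ in_arc (al i) (be i) p).
      { intros C. apply (Hd i j Hi Hj Hne p). split; auto. exists 0%Z. unfold p. rewrite Rplus_0_r. lra. }
      rewrite in_arc_Dz in Hn. apply Rnot_le_lt in Hn.
      exists ((Dz (p - mid (al i) (be i)) - hl (al i) (be i)) / 2). split. lra. intros. right. lra. }
  set (eta := Rmin e0 (/4)).
  assert (Heta : 0 < eta <= e0) by (unfold eta; split; [apply Rmin_glb_lt; lra| apply Rmin_l]).
  assert (Heta2 : eta <= /4) by apply Rmin_r.
  set (q := p + eta).
  assert (Tz : forall i, (i < n)%nat -> tau (al i) (be i) eta q = 0).
  { intros i Hi. apply tau_zero. lra. destruct (H0 i Hi eta Heta) as [->|Hi2].
    - unfold q, p, mid, hl. rewrite <- Heq.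
      replace (al j + eta - (al j + al j) / 2) with eta by field. rewrite Dz_small; lra.
    - pose proof (Dz_lip (q - mid (al i) (be i)) (p - mid (al i) (be i))). 
      replace (q - mid (al i) (be i) - (p - mid (al i) (be i))) with eta in H by (unfold q; ring).
      rewrite (Rabs_pos_eq eta) in H by lra. rabs; lra. }
  set (h := phi n al be eta).
  assert (Hq : h q = 1).
  { unfold h, phi, sumtau. rewrite (sumR_ext _ (fun _ => 0)) by auto. rewrite sumR_const, Rmult_0_r.
    unfold Rmax. destruct Rle_dec; lra. }
  destruct (Hh h (phi_cont _ _ _ _) (phi_per _ _ _ _)) with (j := j) as [H1 H2]; auto.
  - intros; apply phi_bounds.
  - intros; apply phi_zero; auto. lra.
  - exists q. lra.
  - rewrite Heq in H1. lra.
Qed.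

Lemma loc_pos t : 0 < t -> locally t (fun s => 0 < s).
Proof. intros Ht. exists (mkposreal t Ht). intros y Hy. change (Rabs (y - t) < t) in Hy.
 rabs; lra. Qed.

Lemma cont_pt_intro (g : R -> R) x0 :
  (forall eps, 0 < eps -> exists del, 0 < del /\ forall x, Rabs (x - x0) < del -> Rabs (g x - g x0) < eps) ->
  continuity_pt g x0.
Proof.
  intros H. unfold continuity_pt, continue_in, limit1_in, limit_in. simpl. unfold R_dist.
  intros eps Heps. destruct (H eps Heps) as [d [Hd Hd']]. exists d. split; auto.
  intros x [_ Hx]. apply Hd'; auto.
Qed.

Lemma cont_pt_elim (g : R -> R) x0 : continuity_pt g x0 ->
  forall eps, 0 < eps -> exists del, 0 < del /\ forall x, Rabs (x - x0) < del -> Rabs (g x - g x0) < eps.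
Proof.
  intros H eps Heps. unfold continuity_pt, continue_in, limit1_in, limit_in in H. simpl in H. unfold R_dist in H.
  destruct (H eps Heps) as [d [Hd Hd']]. exists d. split; auto. intros x Hx.
  destruct (Req_dec x x0) as [->|Hne]. rewrite Rminus_diag, Rabs_R0. auto.
  apply Hd'. split; auto. unfold D_x, no_cond. split; auto.
Qed.

Lemma zero_int (g : R -> R) a b : continuity g -> a < b -> (forall x, 0 <= g x) -> RInt g a b = 0 ->
  forall x, a <= x <= b -> g x = 0.
Proof.
  intros Hc Hab Hg HI x Hx. destruct (Hg x) as [Hp|Hz]; [exfalso|auto].
  destruct (cont_pt_elim g x (Hc x) (g x / 2)) as [d [Hd Hd']]. lra.
  set (c := Rmax a (x - d / 2)). set (e := Rmin b (x + d / 2)).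
  assert (Hc1 : a <= c) by apply Rmax_l. assert (He1 : e <= b) by apply Rmin_l.
  assert (Hce : c < e).
  { unfold c, e, Rmax, Rmin. repeat destruct Rle_dec; lra. }
  assert (Hin : forall y, c < y < e -> 0 < g y).
  { intros y Hy. assert (Rabs (y - x) < d).
    { unfold c, e, Rmax, Rmin in Hy. repeat destruct Rle_dec; rabs; lra. }
    pose proof (Hd' y H). rabs; lra. }
  assert (0 < RInt g c e). { apply RInt_gt_0; auto. intros; apply cont_c; auto. }
  rewrite <- (chasles g a c b Hc), <- (chasles g c e b Hc) in HI.
  assert (0 <= RInt g a c) by (apply RInt_nonneg; auto). 
  assert (0 <= RInt g e b) by (apply RInt_nonneg; [lra|auto|auto]).
  lra.
Qed.

Lemma gronwall (E K d : R -> R) : (forall t, continuity_pt E t) -> (forall t, continuity_pt K t) ->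
  (forall t, 0 <= t -> 0 <= E t) -> E 0 = 0 ->
  (forall t, 0 < t -> is_derive E t (d t) /\ d t <= K t * E t) -> forall t, 0 <= t -> E t = 0.
Proof.
  intros HE HK H0 HE0 HD t0 Ht0.
  destruct (Rle_lt_or_eq_dec _ _ Ht0) as [Hpos|<-]; auto.
  destruct (H0 t0 Ht0) as [Hgt|]; auto. exfalso.
  destruct (continuity_ab_maj K 0 t0) as [Mx [HMx _]]. lra. intros; apply HK.
  set (C := K Mx).
  set (G := fun x => E x * exp (- C * x)).
  assert (Gc : forall x, continuity_pt G x).
  { intros x. apply continuity_pt_mult. apply HE.
    apply continuity_pt_comp with (f1 := fun x => - C * x) (f2 := exp).
    apply continuity_pt_mult. apply continuity_pt_const. intros ? ?; auto. apply continuity_pt_id.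
    apply derivable_continuous_pt. apply derivable_pt_exp. }
  assert (Gd : forall x, 0 < x -> is_derive G x ((d x - C * E x) * exp (- C * x))).
  { intros x Hx. apply is_derive_Reals. destruct (HD x Hx) as [Hd _]. apply is_derive_Reals in Hd.
    assert (H2 : derivable_pt_lim (fun x => exp (- C * x)) x (- C * exp (- C * x))).
    { apply is_derive_Reals. auto_derive. auto. ring. }
    pose proof (derivable_pt_lim_mult _ _ _ _ _ Hd H2) as H3. unfold mult_fct in H3.
    replace ((d x - C * E x) * exp (- C * x)) with (d x * exp (- C * x) + E x * (- C * exp (- C * x))) by ring.
    exact H3. }
  assert (Gle : forall t1, 0 < t1 < t0 -> G t0 <= G t1).
  { intros t1 Ht1. destruct (MVT_gen G t1 t0 (fun x => (d x - C * E x) * exp (- C * x))) as [c [Hc Hc']].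
    - intros x Hx. apply Gd. rewrite Rmin_left in Hx by lra. lra.
    - intros; apply Gc.
    - rewrite Rmin_left in Hc by lra. rewrite Rmax_right in Hc by lra.
      assert (HKc : K c <= C) by (apply HMx; lra).
      destruct (HD c) as [_ Hdc]. lra.
      assert (0 <= E c) by (apply H0; lra). pose proof (exp_pos (- C * c)).
      assert ((d c - C * E c) * exp (- C * c) <= 0).
      { apply Rmult_le_0_r; [|lra]. nra. }
      nra. }
  assert (G0 : G t0 > 0) by (unfold G; pose proof (exp_pos (- C * t0)); nra).
  destruct (cont_pt_elim G 0 (Gc 0) (G t0)) as [del [Hdel Hdel']]. lra.
  set (t1 := Rmin (del / 2) (t0 / 2)).
  assert (Ht1 : 0 < t1 < t0 /\ t1 < del).
  { unfold t1, Rmin. destruct Rle_dec; lra. }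
  pose proof (Gle t1 ltac:(lra)). pose proof (Hdel' t1 ltac:(rewrite Rminus_0_r, Rabs_pos_eq; lra)).
  unfold G at 2 in H1. rewrite HE0, Rmult_0_l in H1. rewrite Rminus_0_r in H1. rabs; lra.
Qed.

Section Sol.
Variables (f ft : R -> R -> R).
Hypotheses (Hf : cont2_on (fun t _ => 0 <= t) f) (Hft : cont2_on (fun t _ => 0 < t) ft)
  (Hdt : forall t th, 0 < t -> derivable_pt_lim (fun s => f s th) t (ft t th)).

Definition Fx s th := f (Rmax 0 s) th.

Lemma Fx_cont2 s th : continuity_2d_pt Fx s th.
Proof.
  intros eps. destruct (Hf (Rmax 0 s) th (Rmax_l 0 s) eps (cond_pos eps)) as [del [Hdel H]].
  exists (mkposreal del Hdel). intros u v Hu Hv. unfold Fx. apply H. apply Rmax_l.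
  eapply Rle_lt_trans. apply Rmax0_lip. exact Hu. exact Hv.
Qed.

Lemma f_cont t : 0 <= t -> continuity (f t).
Proof.
  intros Ht x. apply cont_pt_intro. intros eps Heps.
  destruct (Hf t x Ht eps Heps) as [del [Hdel H]]. exists del. split; auto.
  intros y Hy. apply H; auto. rewrite Rminus_diag, Rabs_R0. auto.
Qed.

Lemma ft_cont t : 0 < t -> continuity (ft t).
Proof.
  intros Ht x. apply cont_pt_intro. intros eps Heps.
  destruct (Hft t x Ht eps Heps) as [del [Hdel H]]. exists del. split; auto.
  intros y Hy. apply H; auto. rewrite Rminus_diag, Rabs_R0. auto.
Qed.

Lemma ft_cont2 t th : 0 < t -> continuity_2d_pt ft t th.
Proof.
  intros Ht eps. destruct (Hft t th Ht eps (cond_pos eps)) as [del [Hdel H]].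
  assert (Hm : 0 < Rmin del t) by (apply Rmin_glb_lt; auto).
  exists (mkposreal _ Hm). intros u v Hu Hv. simpl in Hu, Hv.
  pose proof (Rmin_l del t). pose proof (Rmin_r del t).
  apply H. rabs; lra. lra. lra.
Qed.

Lemma Fx_cont_th s : continuity (Fx s).
Proof.
  intros x. apply cont_pt_intro. intros eps Heps.
  destruct (Fx_cont2 s x (mkposreal eps Heps)) as [del H]. exists del. split. apply cond_pos.
  intros y Hy. apply H; auto. rewrite Rminus_diag, Rabs_R0. apply cond_pos.
Qed.

Lemma Fx_cont_t th : continuity (fun s => Fx s th).
Proof.
  intros x. apply cont_pt_intro. intros eps Heps.
  destruct (Fx_cont2 x th (mkposreal eps Heps)) as [del H]. exists del. split. apply cond_pos.
  intros y Hy. apply H; auto. rewrite Rminus_diag, Rabs_R0. apply cond_pos.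
Qed.

Lemma RInt_Fx_cont a b : a <= b -> continuity (fun s => RInt (Fx s) a b).
Proof.
  intros Hab t. apply cont_pt_intro. intros eps Heps.
  assert (He' : 0 < eps / (b - a + 1)) by (apply Rdiv_lt_0_compat; lra).
  destruct (uniform_continuity_2d_1d' Fx a b t (fun x _ => Fx_cont2 t x) (mkposreal _ He')) as [del Hdel].
  exists del. split. apply cond_pos. intros s Hs. simpl in Hdel.
  assert (Hpt : forall th, a <= th <= b -> Rabs (Fx s th - Fx t th) < eps / (b - a + 1)).
  { intros th Hth. apply Hdel; auto; rabs; lra. }
  pose proof (RInt_lin (Fx s) (Fx t) a b (-1) (Fx_cont_th s) (Fx_cont_th t)) as Eq.
  assert (Hup : RInt (fun x => Fx s x + -1 * Fx t x) a b <= eps / (b - a + 1) * (b - a)).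
  { apply RInt_upper; auto. apply continuity_plus. apply Fx_cont_th. apply continuity_scal. apply Fx_cont_th.
    intros x Hx. pose proof (Hpt x ltac:(lra)). rabs; lra. }
  assert (Hlo : - (eps / (b - a + 1)) * (b - a) <= RInt (fun x => Fx s x + -1 * Fx t x) a b).
  { apply RInt_lower; auto. apply continuity_plus. apply Fx_cont_th. apply continuity_scal. apply Fx_cont_th.
    intros x Hx. pose proof (Hpt x ltac:(lra)). rabs; lra. }
  assert (eps / (b - a + 1) * (b - a) < eps).
  { assert (Hq : eps / (b - a + 1) * (b - a) = eps - eps / (b - a + 1)) by (field; lra). rewrite Hq. lra. }
  rewrite Eq in Hup, Hlo. rabs; lra.
Qed.

Lemma deriv_term a b t : 0 < t -> is_derive (fun s => RInt (Fx s) a b) t (RInt (ft t) a b).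
Proof.
  intros Ht.
  assert (H1 : locally t (fun x0 => forall th, Rmin a b <= th <= Rmax a b -> ex_derive (fun u => f u th) x0)).
  { apply (filter_imp (fun s => 0 < s)). intros s Hs th _. exists (ft s th). apply is_derive_Reals. auto.
    apply loc_pos; auto. }
  assert (H2 : forall th, Rmin a b <= th <= Rmax a b -> continuity_2d_pt (fun u v => Derive (fun z => f z v) u) t th).
  { intros th _. apply continuity_2d_pt_ext_loc with ft. 
    - exists (mkposreal t Ht). intros u v Hu _. simpl in Hu. symmetry. apply is_derive_unique.
      apply is_derive_Reals. apply Hdt. rabs; lra.
    - apply ft_cont2; auto. }
  assert (H3 : locally t (fun y => ex_RInt (fun th => f y th) a b)).
  { apply (filter_imp (fun s => 0 < s)). intros s Hs. apply cont_ex. apply f_cont. lra. apply loc_pos; auto. }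
  pose proof (is_derive_RInt_param f a b t H1 H2 H3) as Hd.
  replace (RInt (ft t) a b) with (RInt (fun th => Derive (fun u => f u th) t) a b).
  - apply (is_derive_ext_loc (fun x0 => RInt (fun th => f x0 th) a b)); auto.
    apply (filter_imp (fun s => 0 < s)). intros s Hs. unfold Fx. rewrite Rmax_right by lra. reflexivity.
    apply loc_pos; auto.
  - apply RInt_ext. intros x _. apply is_derive_unique. apply is_derive_Reals. auto.
Qed.

End Sol.

Lemma is_derive_sumR (G : nat -> R -> R) (dG : nat -> R) n t :
  (forall j, (j < n)%nat -> is_derive (G j) t (dG j)) ->
  is_derive (fun s => sumR (fun j => G j s) n) t (sumR dG n).
Proof.
  induction n; intros H; simpl.
  - apply (is_derive_const (K := R_AbsRing) (V := R_NormedModule) 0 t).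
  - apply (is_derive_plus (fun s => sumR (fun j => G j s) n) (G n)). apply IHn. intros; apply H; lia. apply H; lia.
Qed.

Theorem mainTheorem17 (V : R -> R) (n : nat) (alpha beta : nat -> R) (f : R -> R -> R) :
  continuity V -> periodic1 V -> odd_fun V ->
  valid_intervals n alpha beta ->
  (forall h : R -> R, continuity h -> periodic1 h -> (forall x, 0 <= h x) ->
     (forall x, inA n alpha beta x -> h x = 0) -> (exists x, h x <> 0) ->
     forall j, (j < n)%nat -> conv V h (alpha j) > 0 /\ conv V h (beta j) < 0) ->
  TP0_solution V f ->
  (forall t theta, 0 <= t -> 0 <= f t theta) ->
  (forall theta, inA n alpha beta theta -> f 0 theta = 0) ->
  forall t theta, 0 <= t -> inA n alpha beta theta -> f t theta = 0.
Proof.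
  intros HV HVp _ Hval Hh [Hper [ft [fth [Hf [Hft [_ [Hdt [_ Heq]]]]]]]] Hf0 Hinit t th Ht HA.
  pose proof (nondegenerate V n alpha beta Hval Hh) as Hlt.
  destruct (per_bounded V HV HVp) as [M [M0 HM]].
  set (E := fun s => sumR (fun j => RInt (Fx f s) (alpha j) (beta j)) n).
  set (K := fun s => M * sumR (fun j => Fx f s (alpha j) + Fx f s (beta j)) n).
  set (d := fun s => sumR (fun j => conv V (f s) (beta j) * f s (beta j) - conv V (f s) (alpha j) * f s (alpha j)) n).
  assert (Fnn : forall s x, 0 <= Fx f s x) by (intros; unfold Fx; apply Hf0; apply Rmax_l).
  assert (HE0 : forall s, 0 < s -> Fx f s = f s).
  { intros s Hs. unfold Fx. rewrite Rmax_right by lra. reflexivity. }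
  assert (Hz : forall s, 0 <= s -> E s = 0).
  { apply (gronwall E K d).
    - apply (sumR_cont (fun j s => RInt (Fx f s) (alpha j) (beta j))). intros j Hj.
      apply RInt_Fx_cont; auto. left; auto.
    - intros s. apply continuity_pt_mult. apply continuity_pt_const. intros ? ?; auto.
      apply (sumR_cont (fun j s => Fx f s (alpha j) + Fx f s (beta j))). intros j Hj.
      apply continuity_plus; apply Fx_cont_t; auto.
    - intros s Hs. apply sumR_ge0. intros j Hj. apply RInt_nonneg. left; auto. apply Fx_cont_th; auto.
      intros; auto.
    - unfold E. rewrite (sumR_ext _ (fun _ => 0)). rewrite sumR_const. ring.
      intros j Hj. transitivity (RInt (fun _ => 0) (alpha j) (beta j)); [|apply RInt_zero].
      apply RInt_ext. intros x Hx. unfold Fx. rewrite Rmax_left by lra. apply Hinit.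
      exists j. split; auto. exists 0%Z. rewrite Rmin_left, Rmax_right in Hx by (left; auto). rewrite Rplus_0_r. lra.
    - intros s Hs. split.
      + unfold E, d. 
        replace (sumR (fun j => conv V (f s) (beta j) * f s (beta j) - conv V (f s) (alpha j) * f s (alpha j)) n)
          with (sumR (fun j => RInt (ft s) (alpha j) (beta j)) n).
        apply (is_derive_sumR (fun j s => RInt (Fx f s) (alpha j) (beta j))).
        intros j Hj. apply deriv_term; auto.
        apply sumR_ext. intros j Hj.
        apply is_RInt_unique.
        apply (is_RInt_derive (V := R_CompleteNormedModule) (fun x => conv V (f s) x * f s x) (ft s)).
        intros x _. apply is_derive_Reals. apply Heq; auto.
        intros x _. apply cont_c. apply ft_cont; auto.
      + destruct (per_bounded (f s) (f_cont f Hf s ltac:(lra)) (Hper s ltac:(lra))) as [B [B0 HB]].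
        assert (Hk := key V n alpha beta (f s) M B HV HM (fun i Hi => Rlt_le _ _ (Hlt i Hi)) (f_cont f Hf s ltac:(lra))
           (Hper s ltac:(lra)) (fun x => Hf0 s x ltac:(lra)) HB Hh).
        assert (EEq : E s = EE n alpha beta (f s)).
        { unfold E, EE. rewrite HE0; auto. }
        unfold K, d. rewrite EEq. rewrite HE0 by auto.
        set (EE0 := EE n alpha beta (f s)) in *.
        transitivity (sumR (fun j => EE0 * M * (f s (alpha j) + f s (beta j))) n).
        * apply sumR_le. intros j Hj. destruct (Hk j Hj) as [H1 H2].
          pose proof (Hf0 s (alpha j) ltac:(lra)). pose proof (Hf0 s (beta j) ltac:(lra)).
          nra.
        * right. rewrite <- sumR_mult_l. ring. }
  destruct HA as [j [Hj [k Hk]]].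
  assert (Hj0 : RInt (Fx f t) (alpha j) (beta j) = 0).
  { apply (sumR_zero (fun j => RInt (Fx f t) (alpha j) (beta j)) n).
    - intros i Hi. apply RInt_nonneg. left; auto. apply Fx_cont_th; auto. intros; auto.
    - apply (Hz t Ht).
    - exact Hj. }
  pose proof (zero_int (Fx f t) (alpha j) (beta j) (Fx_cont_th f Hf t) (Hlt j Hj) (Fnn t) Hj0 (th + IZR k) Hk) as Z.
  unfold Fx in Z. rewrite Rmax_right in Z by lra. rewrite (per_int (f t) (Hper t Ht)) in Z. exact Z.
Qed.
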